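(* Let $(\vdash,\overline{\cdot},\widehat{\cdot})$ be a setting satisfying Pre-Relevance, let $\mathcal{S}_1,\mathcal{S}_2\subseteq\mathcal{L}$ with $\mathcal{S}_1\mid\mathcal{S}_2$, and let $a,b\in\mathit{Arg}_{\vdash}(\mathcal{S}_1\cup\mathcal{S}_2)$ with $\mathsf{Supp}(b)=\Theta$ such that $b$ attacks $a$. Then: (1) some $b'\in\mathit{Arg}_{\vdash}(\mathcal{S}_1\cap\Theta)\cup\mathit{Arg}_{\vdash}(\mathcal{S}_2\cap\Theta)$ attacks $a$; (2) if $a\in\mathit{Arg}_{\vdash}(\mathcal{S}_1)$, some $b'\in\mathit{Arg}_{\vdash}(\mathcal{S}_1\cap\Theta)$ attacks $a$.
   Context: $\mathcal{L}$ is the set of formulas of a language built from propositional atoms; $\mathsf{Atoms}(\mathcal{S})$ is the set of atoms occurring in $\mathcal{S}$, and $\mathcal{S}_1\mid\mathcal{S}_2$ means $\mathsf{Atoms}(\mathcal{S}_1)\cap\mathsf{Atoms}(\mathcal{S}_2)=\emptyset$. A setting is $(\vdash,\overline{\cdot},\widehat{\cdot})$ with ${\vdash}\subseteq\wp_{\sf fin}(\mathcal{L})\times\mathcal{L}$ arbitrary, $\overline{\cdot}:\mathcal{L}\to\wp(\mathcal{L})$, $\widehat{\cdot}$ assigning to each nonempty finite set a finite set of formulas, with $\widehat{\emptyset}=\emptyset$. $\mathit{Arg}_{\vdash}(\mathcal{S})=\{(\Gamma,\gamma):\Gamma\subseteq\mathcal{S}\text{ finite},\Gamma\vdash\gamma\}$,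 $\mathsf{Supp}((\Gamma,\gamma))=\Gamma$; $(\Gamma,\gamma)$ attacks $(\Gamma',\gamma')$ iff $\gamma\in\overline{\phi}$ for some $\phi\in\widehat{\Gamma'}$. Pre-Relevance of the setting: (a) for all $\mathcal{S}_1,\mathcal{S}_2,\phi$ with $\mathcal{S}_1\cup\{\phi\}\mid\mathcal{S}_2$, $\mathcal{S}_1\cup\mathcal{S}_2\vdash\phi$ implies $\mathcal{S}_1'\vdash\phi$ for some $\mathcal{S}_1'\subseteq\mathcal{S}_1$; (b) primeness: for all sets of atoms $\mathcal{A}_1\mid\mathcal{A}_2$, all finite $\mathcal{S}_1,\mathcal{T}_1,\mathcal{S}_2,\mathcal{T}_2$ with $\mathsf{Atoms}(\mathcal{S}_i),\mathsf{Atoms}(\mathcal{T}_i)\subseteq\mathcal{A}_i$, and all $\phi,\psi$ with $\psi\in\overline{\phi}$, $\phi\in\widehat{\mathcal{T}_1\cup\mathcal{T}_2}$: if $\mathcal{S}_1\cup\mathcal{S}_2\vdash\psi$ then there are $i\in\{1,2\}$, $\mathcal{S}_i'\subseteq\mathcal{S}_i$, $\phi_i\in\widehat{\mathcal{T}_i}$, $\psi_i\in\overline{\phi_i}$ with $\mathcal{S}_i'\vdash\psi_i$; (c) $\widehat{\Delta}\subseteq\widehat{\Delta\cup\Delta'}$ for all finite $\Delta,\Delta'$. *)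

(* Defs.v *)
From mathcomp Require Import all_boot.
From mathcomp Require Import boolp classical_sets cardinality.
Set Implicit Arguments. Unset Strict Implicit. Unset Printing Implicit Defensive.
Local Open Scope classical_set_scope.

Section Defs.
Variables (Atom Form : Type) (atoms : Form -> set Atom).

Definition Atoms (S : set Form) : set Atom := \bigcup_(f in S) atoms f.

Definition atom_disjoint (S1 S2 : set Form) : Prop :=
  Atoms S1 `&` Atoms S2 = set0.

(* A setting (|-, bar, hat).  |- relates only finite sets of formulas to
   formulas; hat maps finite sets to finite sets and hat(empty) = empty.
   (Values of hat on infinite sets are irrelevant junk.) *)
Record setting := Setting {
  der : set Form -> Form -> Prop;
  bar : Form -> set Form;
  hat : set Form -> set Form;
  der_fin : forall G g, der G g -> finite_set G;
  hat_fin : forall D, finite_set D -> finite_set (hat D);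
  hat0 : hat set0 = set0
}.

Variable st : setting.

Definition argument := (set Form * Form)%type.

Definition Arg (S : set Form) : set argument :=
  [set a | finite_set a.1 /\ a.1 `<=` S /\ der st a.1 a.2].

Definition Supp (a : argument) : set Form := a.1.

Definition attacks (b a : argument) : Prop :=
  exists phi, hat st (Supp a) phi /\ bar st phi b.2.

Definition pre_relevance : Prop :=
  (forall (S1 S2 : set Form) (phi : Form),
      atom_disjoint (S1 `|` [set phi]) S2 ->
      der st (S1 `|` S2) phi ->
      exists S1', S1' `<=` S1 /\ der st S1' phi) /\
  (forall (A1 A2 : set Atom) (S1 T1 S2 T2 : set Form) (phi psi : Form),
      A1 `&` A2 = set0 ->
      finite_set S1 -> finite_set T1 -> finite_set S2 -> finite_set T2 ->
      Atoms S1 `<=` A1 -> Atoms T1 `<=` A1 ->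
      Atoms S2 `<=` A2 -> Atoms T2 `<=` A2 ->
      bar st phi psi -> hat st (T1 `|` T2) phi ->
      der st (S1 `|` S2) psi ->
      (exists S1' phi1 psi1, S1' `<=` S1 /\ hat st T1 phi1 /\
                             bar st phi1 psi1 /\ der st S1' psi1) \/
      (exists S2' phi2 psi2, S2' `<=` S2 /\ hat st T2 phi2 /\
                             bar st phi2 psi2 /\ der st S2' psi2)) /\
  (forall D D' : set Form, finite_set D -> finite_set D' ->
      hat st D `<=` hat st (D `|` D')).

End Defs.

(* Main.v *)
Require Import Defs.
From mathcomp Require Import all_boot.
From mathcomp Require Import boolp classical_sets cardinality.
Local Open Scope classical_set_scope.

Lemma Atoms_sub (Atom Form : Type) (atoms : Form -> set Atom) (A B : set Form) :
  A `<=` B -> Atoms atoms A `<=` Atoms atoms B.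
Proof. by move=> AB x [f Af afx]; exists f => //; apply: AB. Qed.

Lemma key (Atom Form : Type) (atoms : Form -> set Atom)
  (st : setting Form)
  (hPR : pre_relevance atoms st)
  (S1 S2 : set Form) (hdisj : atom_disjoint atoms S1 S2)
  (a b : argument Form) (T1 T2 : set Form)
  (hT : T1 `|` T2 = a.1) (hT1 : Atoms atoms T1 `<=` Atoms atoms S1)
  (hT2 : Atoms atoms T2 `<=` Atoms atoms S2)
  (ha : Arg st (S1 `|` S2) a) (hb : Arg st (S1 `|` S2) b)
  (hatt : attacks st b a) :
  (exists b' : argument Form, Arg st (S1 `&` Supp b) b' /\
      exists phi, hat st T1 phi /\ bar st phi b'.2) \/
  (exists b' : argument Form, Arg st (S2 `&` Supp b) b' /\
      exists phi, hat st T2 phi /\ bar st phi b'.2).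
Proof.
case: hPR => _ [hB _].
case: ha => fa [sa da]; case: hb => fb [sb db].
case: hatt => phi [hphi bphi].
have fT1 : finite_set T1 by apply: (sub_finite_set _ fa); rewrite -hT; apply: subsetUl.
have fT2 : finite_set T2 by apply: (sub_finite_set _ fa); rewrite -hT; apply: subsetUr.
have eb : (S1 `&` Supp b) `|` (S2 `&` Supp b) = b.1.
  by rewrite -setIUl setIidr.
have := hB (Atoms atoms S1) (Atoms atoms S2) (S1 `&` Supp b) T1 (S2 `&` Supp b) T2
  phi b.2 hdisj.
case.
- by apply: (sub_finite_set _ fb) => x [].
- done.
- by apply: (sub_finite_set _ fb) => x [].
- done.
- by apply: Atoms_sub => x [].
- done.
- by apply: Atoms_sub => x [].
- done.
- done.
- by rewrite hT.
- by rewrite eb.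
- move=> [S' [phi1 [psi1 [h1 [h2 [h3 h4]]]]]]; left.
  exists (S', psi1); split; last by exists phi1.
  by split; [apply: (der_fin h4) | split].
- move=> [S' [phi1 [psi1 [h1 [h2 [h3 h4]]]]]]; right.
  exists (S', psi1); split; last by exists phi1.
  by split; [apply: (der_fin h4) | split].
Qed.

Theorem lemma4 (Atom Form : Type) (atoms : Form -> set Atom)
  (st : setting Form)
  (hPR : pre_relevance atoms st)
  (S1 S2 : set Form) (hdisj : atom_disjoint atoms S1 S2)
  (a b : argument Form)
  (ha : Arg st (S1 `|` S2) a) (hb : Arg st (S1 `|` S2) b)
  (hatt : attacks st b a) :
  (exists b' : argument Form,
      (Arg st (S1 `&` Supp b) b' \/ Arg st (S2 `&` Supp b) b') /\
      attacks st b' a) /\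
  (Arg st S1 a ->
   exists b' : argument Form, Arg st (S1 `&` Supp b) b' /\ attacks st b' a).
Proof.
have hc := hPR.2.2.
have [fa [sa _]] := ha.
split.
- have hT : (a.1 `&` S1) `|` (a.1 `&` S2) = a.1 by rewrite -setIUr setIidl.
  have fT1 : finite_set (a.1 `&` S1) by apply: (sub_finite_set _ fa) => x [].
  have fT2 : finite_set (a.1 `&` S2) by apply: (sub_finite_set _ fa) => x [].
  case: (@key _ _ _ _ hPR _ _ hdisj _ _ _ _ hT _ _ ha hb hatt).
  + by apply: Atoms_sub => x [].
  + by apply: Atoms_sub => x [].
  + move=> [b' [hb' [phi [h1 h2]]]]; exists b'; split; first by left.
    exists phi; split => //; have := hc _ _ fT1 fT2 _ h1; rewrite hT; exact.
  + move=> [b' [hb' [phi [h1 h2]]]]; exists b'; split; first by right.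
    exists phi; split => //; have := hc _ _ fT2 fT1 _ h1; rewrite setUC hT; exact.
- move=> [_ [sa1 _]].
  have hT : a.1 `|` set0 = a.1 by rewrite setU0.
  case: (@key _ _ _ _ hPR _ _ hdisj _ _ _ _ hT _ _ ha hb hatt).
  + by apply: Atoms_sub.
  + by move=> x [f []].
  + move=> [b' [hb' [phi [h1 h2]]]]; exists b'; split => //.
    by exists phi.
  + by move=> [b' [_ [phi [h1 _]]]]; move: h1; rewrite hat0.
Qed.
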